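(* Let $X_t$, $t=0,1,\dots$, be a Markov chain on the finite state space $\Sigma=\{1,\dots,N\}$ with transition probability matrix $P=[p_{ij}]$ acting on row vectors by $x_{t+1}=x_tP$. Assume that $P$ is diagonalizable and has full rank. Consider a set of linearly independent right eigenvectors $u^{\alpha}$ of $P$, $Pu^{\alpha}=\lambda^{\alpha}u^{\alpha}$, indexed by $\alpha\in I$ where $I\subseteq\Sigma$. Define an equivalence relation on $\Sigma$ by $i\sim j$ if and only if $u^{\alpha}_i=u^{\alpha}_j$ for all $\alpha\in I$, and let $\widetilde{\Sigma}$ be the resulting partition of $\Sigma$ into equivalence classes. Then: (1) If $|\widetilde{\Sigma}|=|I|$, then $\widetilde{\Sigma}$ is a (strong) lumping of the Markov chain. (2) Conversely, if $\widetilde{\Sigma}$ is a partition of $\Sigma$ that is a (strong) lumping of the Markov chain, then there exist $|\widetilde{\Sigma}|$ linearly independent right eigenvectors of $P$ that are invariant under permutations of states within the lumps (i.e., each such eigenvector $y$ satisfies $y_i=y_j$ whenever $i,j$ lie in the same block of $\widetilde{\Sigma}$).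
   Context: A lumping (partition) of $\Sigma$ is $\widetilde{\Sigma}=\{L_1,\dots,L_M\}$ with nonempty, pairwise disjoint blocks $L_k$ whose union is $\Sigma$; it is encoded by the $N\times M$ matrix $\Pi=[\pi_{ik}]$ with $\pi_{ik}=1$ if $i\in L_k$ and $0$ otherwise. The chain is called strongly lumpable with respect to $\widetilde{\Sigma}$ (and $\widetilde{\Sigma}$ is then called a lumping of the chain) if the quotient process $\tilde{x}_t=x_t\Pi$ is a Markov process; equivalently, for all blocks $L_k,L_l$ the quantity $\sum_{j\in L_l}p_{ij}$ is the same for every $i\in L_k$. Right eigenvectors are $N\times 1$ column vectors $u$ with $Pu=\lambda u$. *)

(* Defs.v *)
From HB Require Import structures.
From mathcomp Require Import all_boot all_order all_algebra.
Set Implicit Arguments. Unset Strict Implicit. Unset Printing Implicit Defensive.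
Import Order.TTheory GRing.Theory Num.Theory.
Local Open Scope ring_scope.

(* Scalars: an arbitrary numeric algebraically closed field C (e.g. the
   complex numbers); a stochastic matrix has real entries, which is
   expressed by 0 <= p_ij (nonnegativity forces realness). *)

Definition stochastic (C : numClosedFieldType) (N : nat) (P : 'M[C]_N) : Prop :=
  (forall i j, 0 <= P i j) /\ (forall i, \sum_(j < N) P i j = 1).

Definition right_eigenvector (C : numClosedFieldType) (N : nat)
  (P : 'M[C]_N) (lam : C) (u : 'cV[C]_N) : Prop :=
  u != 0 /\ P *m u = lam *: u.

Definition lin_indep (C : numClosedFieldType) (N : nat) (T : finType)
  (I : {pred T}) (u : T -> 'cV[C]_N) : Prop :=
  forall c : T -> C, \sum_(a in I) c a *: u a = 0 -> forall a, a \in I -> c a = 0.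

Definition strongly_lumpable (C : numClosedFieldType) (N : nat)
  (P : 'M[C]_N) (L : {set {set 'I_N}}) : Prop :=
  partition L [set: 'I_N] /\
  forall B B', B \in L -> B' \in L -> forall i k, i \in B -> k \in B ->
    \sum_(j in B') P i j = \sum_(j in B') P k j.

Definition eig_equiv (C : numClosedFieldType) (N : nat) (I : {set 'I_N})
  (u : 'I_N -> 'cV[C]_N) : rel 'I_N :=
  fun i j => [forall a in I, u a i 0 == u a j 0].

Definition eig_partition (C : numClosedFieldType) (N : nat) (I : {set 'I_N})
  (u : 'I_N -> 'cV[C]_N) : {set {set 'I_N}} :=
  equivalence_partition (eig_equiv I u) [set: 'I_N].

(* Main.v *)
Require Import Defs.
From HB Require Import structures.
From mathcomp Require Import all_boot all_order all_algebra.
Set Implicit Arguments. Unset Strict Implicit. Unset Printing Implicit Defensive.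
Import Order.TTheory GRing.Theory Num.Theory.
Local Open Scope ring_scope.


Lemma diag_tr (F : fieldType) n (A : 'M[F]_n) : diagonalizable A -> diagonalizable A^T.
Proof.
move=> [Q Qu] /(diagonalizable_forLR Qu) [D ->].
have Qtu : Q^T \in unitmx by rewrite unitmx_tr.
exists (invmx Q^T); first by rewrite unitmx_inv.
apply/diagonalizable_forPex; exists D; apply: simmxW.
  by rewrite row_free_unit unitmx_inv.

rewrite mxpoly.conjumx ?unitmx_inv // invmxK !trmx_mul trmx_inv tr_diag_mx.
by rewrite mulKmx.
Qed.

Lemma diag_restrict (F : fieldType) n m (A : 'M[F]_n.+1) (W : 'M_(m.+1, n.+1)) :
  diagonalizable A -> row_free W -> stablemx W A ->
  exists Q : 'M_m.+1, exists d : 'rV_m.+1,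
    row_free (Q *m W) /\ (Q *m W) *m A = diag_mx d *m (Q *m W).
Proof.
move=> /diagonalizableP [rs urs hA] fW sW.
have : diagonalizable (mxpoly.conjmx W A).
  apply/diagonalizableP; exists rs => //.
  exact: dvdp_trans (mxpoly.mxminpoly_conj fW sW) hA.
move=> [Q Qu] /diagonalizable_forPex [d hd].
have := simmxPp (stablemx_unit _ Qu) hd => hQ.
exists Q, d; split.
  by rewrite /row_free mxrankMfree // mxrank_unit.
rewrite -mulmxA -[W *m A](mulmxKpV sW) -/(mxpoly.conjmx W A) mulmxA hQ mulmxA //.
Qed.


Definition bmx (F : fieldType) N (L : {set {set 'I_N}}) : 'M[F]_(#|L|, N) :=
  \matrix_(k, j) ((j \in enum_val (k : 'I_#|L|))%:R).

Lemma part_uniq N (L : {set {set 'I_N}}) B B' j :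
  partition L [set: 'I_N] -> B \in L -> B' \in L -> j \in B -> j \in B' -> B = B'.
Proof.
move=> /and3P [_ tL _] BL B'L jB jB'.
by rewrite -(def_pblock tL BL jB) (def_pblock tL B'L jB').
Qed.

Definition vrep (F : fieldType) N (v : 'rV[F]_N) (B : {set 'I_N}) : F :=
  if [pick x in B] is Some x then v 0 x else 0.

Lemma vrepE (F : fieldType) N (v : 'rV[F]_N) (B : {set 'I_N}) j :
  (forall i j, i \in B -> j \in B -> v 0 i = v 0 j) -> j \in B -> vrep v B = v 0 j.
Proof.
move=> h jB; rewrite /vrep; case: pickP => [x xB|/(_ j)]; first exact: h.
by rewrite jB.
Qed.

Lemma in_span (F : fieldType) N (L : {set {set 'I_N}}) (v : 'rV[F]_N) :
  partition L [set: 'I_N] ->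
  (forall B, B \in L -> forall i j, i \in B -> j \in B -> v 0 i = v 0 j) ->
  (v <= bmx F L)%MS.
Proof.
move=> pL hv; have /and3P [/eqP cL tL _] := pL.
apply/submxP; exists (\row_k vrep v (enum_val (k : 'I_#|L|))); apply/rowP => j.
rewrite !mxE.
rewrite (eq_bigr (fun k : 'I_#|L| => vrep v (enum_val k) * (j \in enum_val k)%:R)); last by move=> k _; rewrite !mxE.
rewrite -(big_enum_val (fun B : {set 'I_N} => vrep v B * (j \in B)%:R)) /=.
have jc : j \in cover L by rewrite cL inE.
rewrite (bigD1 (pblock L j)) ?pblock_mem //= mem_pblock jc mulr1.
rewrite big1 ?addr0.
  by rewrite (@vrepE _ _ _ _ j (hv _ (pblock_mem jc))) // mem_pblock.
move=> B /andP [BL nB]; case jB: (j \in B); last by rewrite mulr0.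
by rewrite (part_uniq pL BL (pblock_mem jc) jB) ?mem_pblock ?eqxx in nB.
Qed.

Lemma sum_ind (F : fieldType) N (S : {set 'I_N}) (f : 'I_N -> F) :
  \sum_l (l \in S)%:R * f l = \sum_(l in S) f l.
Proof.
rewrite [RHS]big_mkcond; apply: eq_bigr => l _.
by case: (l \in S); rewrite ?mul1r ?mul0r.
Qed.

Lemma free_crit (F : fieldType) m n (W : 'M[F]_(m, n)) :
  (forall c : 'rV_m, c *m W = 0 -> c = 0) -> row_free W.
Proof.
move=> H; rewrite -kermx_eq0 -submx0; apply/row_subP => r.
have /sub_kermxP h := row_sub r (kermx W).
by rewrite (H _ h) sub0mx.
Qed.

Lemma bmx_free (F : fieldType) N (L : {set {set 'I_N}}) :
  partition L [set: 'I_N] -> row_free (bmx F L).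
Proof.
move=> pL; have /and3P [_ _ L0] := pL; apply: free_crit => c hc.
apply/rowP => k; rewrite mxE.
have kL := enum_valP k.
have /set0Pn [j jB] : enum_val k != set0.
  by apply: contraNneq L0 => <-.
have := congr1 (fun M : 'rV[F]_N => M 0 j) hc; rewrite !mxE => <-.
rewrite (bigD1 k) //= mxE jB mulr1 big1 ?addr0 //.
move=> k' nk; rewrite mxE; case jk: (j \in enum_val k'); last by rewrite mulr0.
have := part_uniq pL (enum_valP k') kL jk jB => /enum_val_inj ek.
by rewrite ek eqxx in nk.
Qed.

Lemma bmx_stable (F : fieldType) N (P : 'M[F]_N) (L : {set {set 'I_N}}) :
  partition L [set: 'I_N] ->
  (forall B B', B \in L -> B' \in L -> forall i k, i \in B -> k \in B ->
    \sum_(j in B') P i j = \sum_(j in B') P k j) ->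
  stablemx (bmx F L) P^T.
Proof.
move=> pL hL; apply/row_subP => k; rewrite row_mul; apply: in_span => // B BL i j iB jB.
rewrite !mxE.
rewrite (eq_bigr (fun l => (l \in enum_val k)%:R * P i l)); last by move=> l _; rewrite !mxE.
rewrite [RHS](eq_bigr (fun l => (l \in enum_val k)%:R * P j l)); last by move=> l _; rewrite !mxE.
rewrite !sum_ind; exact: hL (enum_valP k) i j iB jB.
Qed.


Lemma diag_restrict' (F : fieldType) n m (A : 'M[F]_n) (W : 'M_(m, n)) :
  diagonalizable A -> row_free W -> stablemx W A ->
  exists Q : 'M_m, exists d : 'rV_m,
    row_free (Q *m W) /\ (Q *m W) *m A = diag_mx d *m (Q *m W).
Proof.
case: m W => [|m] W.
  move=> _ _ _; exists 0, 0; split; last by rewrite !flatmx0.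
  by rewrite /row_free flatmx0 mxrank0.
case: n A W => [|n] A W.
  move=> _ fW; have := rank_leq_col W; by rewrite (eqP fW).
exact: diag_restrict.
Qed.

Lemma eig_equivR (C : numClosedFieldType) N (I : {set 'I_N}) (u : 'I_N -> 'cV[C]_N) :
  equivalence_rel (eig_equiv I u).
Proof.
move=> x y z; split; first by apply/forall_inP => a _.
move=> /forall_inP Hxy; apply/forall_inP/forall_inP => H a aI.
  by rewrite -(eqP (Hxy a aI)); exact: H.
by rewrite (eqP (Hxy a aI)); exact: H.
Qed.

Theorem theorem2 (C : numClosedFieldType) (N : nat) (P : 'M[C]_N) :
  stochastic P -> diagonalizable P -> P \in unitmx ->
  (* (1) *)
  (forall (I : {set 'I_N}) (u : 'I_N -> 'cV[C]_N) (lam : 'I_N -> C),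
     (forall a, a \in I -> right_eigenvector P (lam a) (u a)) ->
     lin_indep (mem I) u ->
     #|eig_partition I u| = #|I| ->
     strongly_lumpable P (eig_partition I u)) /\
  (* (2) *)
  (forall L : {set {set 'I_N}},
     strongly_lumpable P L ->
     exists (y : 'I_#|L| -> 'cV[C]_N) (lam : 'I_#|L| -> C),
       (forall a, right_eigenvector P (lam a) (y a)) /\
       lin_indep (mem [set: 'I_#|L|]) y /\
       (forall a B, B \in L -> forall i j, i \in B -> j \in B ->
          y a i 0 = y a j 0)).
Proof.
move=> _ dP _; split.
  move=> I u lam eig li card.
  set L := eig_partition I u.
  have eqR := @eig_equivR C N I u.
  have pL : partition L [set: 'I_N].
    exact: equivalence_partitionP (fun x y z _ _ _ => eqR x y z).
  have same : forall B, B \in L -> forall i k, i \in B -> k \in B ->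
      forall a, a \in I -> u a i 0 = u a k 0.
    move=> B BL i k iB kB a aI.
    have /and3P [_ tL _] := pL.
    have ki : k \in pblock L i by rewrite (def_pblock tL BL iB).
    rewrite (@pblock_equivalence_partition _ (eig_equiv I u) [set: 'I_N]
               (fun x y z _ _ _ => eqR x y z) i k) ?inE // in ki.
    by move/forall_inP: ki => /(_ a aI) /eqP.
  split => //.
  pose U : 'M[C]_(#|I|, N) := \matrix_(k, j) u (enum_val (k : 'I_#|I|)) j 0.
  have fU : row_free U.
    apply: free_crit => r hr.
    pose c a := \sum_(k | enum_val k == a) r 0 k.
    have hc : forall k, c (enum_val k) = r 0 k.
      move=> k; rewrite /c (big_pred1 k) // => k'.
      by rewrite /= (inj_eq enum_val_inj).
    have hs : \sum_(a in I) c a *: u a = 0.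
      rewrite (big_enum_val (fun a => c a *: u a)) /=.
      apply/matrixP => j z; rewrite (ord1 z) summxE mxE.
      transitivity ((r *m U) 0 j); last by rewrite hr mxE.
      by rewrite mxE; apply: eq_bigr => k _; rewrite mxE hc mxE.
    apply/rowP => k; rewrite mxE -hc; apply: li hs _ _.
    exact: enum_valP.
  have sUW : (U <= bmx C L)%MS.
    apply/row_subP => k; apply: in_span => // B BL i j iB jB; rewrite !mxE.
    exact: same B BL i j iB jB _ (enum_valP k).
  have sWU : (bmx C L <= U)%MS.
    have [_ <-] := mxrank_leqif_sup sUW.
    by rewrite (eqP fU) (eqP (bmx_free C pL)) card.
  move=> B B' BL B'L i k iB kB.
  pose k' := enum_rank_in B'L B'.
  have ek : enum_val k' = B' := enum_rankK_in B'L B'L.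
  have /submxP [D hD] : (row k' (bmx C L) <= U)%MS := submx_trans (row_sub _ _) sWU.
  have wj : forall j, (j \in enum_val k')%:R = \sum_a D 0 a * u (enum_val a) j 0 :> C.
    move=> j; have := congr1 (fun M : 'rV[C]_N => M 0 j) hD; rewrite !mxE => ->.
    by apply: eq_bigr => a _; rewrite mxE.
  have key : forall x, \sum_(j in B') P x j =
      \sum_a D 0 a * (lam (enum_val a) * u (enum_val a) x 0).
    move=> x; rewrite -ek -sum_ind.
    transitivity (\sum_j (\sum_a D 0 a * u (enum_val a) j 0) * P x j).
      by apply: eq_bigr => j _; rewrite wj.
    under eq_bigr do rewrite mulr_suml.
    rewrite exchange_big; apply: eq_bigr => a _.
    have [_ ea] := eig _ (enum_valP a).
    have := congr1 (fun M : 'cV[C]_N => M x 0) ea; rewrite !mxE => <-.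
    rewrite mulr_sumr; apply: eq_bigr => j _; rewrite mulrC mulrA.
    by rewrite mulrCA mulrA.
  rewrite !key; apply: eq_bigr => a _.
  by rewrite (same B BL i k iB kB _ (enum_valP a)).
move=> L [pL hL].
have [Q [d [fY hY]]] := diag_restrict' (diag_tr dP) (bmx_free C pL) (bmx_stable pL hL).
set Y := Q *m bmx C L in fY hY.
have Yinj : forall r : 'rV_#|L|, r *m Y = 0 -> r = 0.
  by move=> r /eqP; rewrite mulmx_free_eq0 // => /eqP.
exists (fun a => (row a Y)^T), (fun a => d 0 a); split; [|split].
- move=> a; split.
    apply/eqP => h; have : row a Y = 0 by apply: trmx_inj; rewrite h trmx0.
    rewrite rowE.
    move/Yinj/matrixP/(_ 0 a); rewrite !mxE !eqxx /= => /eqP.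
    by rewrite oner_eq0.
  apply: trmx_inj; rewrite trmx_mul !trmxK linearZ /= trmxK -row_mul hY.
  by rewrite mul_diag_mx; apply/rowP => j; rewrite !mxE.
- move=> c hc.
  have : (\row_a c a) *m Y = 0.
    apply: trmx_inj; rewrite mulmx_sum_row trmx0 linear_sum /= -[RHS]hc.
    apply: eq_big => [a|a _]; first by rewrite !inE.
    by rewrite linearZ /= mxE.
  by move/Yinj/rowP => h a _; have := h a; rewrite !mxE.
- move=> a B BL i j iB jB; rewrite !mxE; apply: eq_bigr => k _; rewrite !mxE.
  suff -> : (i \in enum_val k) = (j \in enum_val k) by [].
  apply/idP/idP => h.
    by rewrite -(part_uniq pL BL (enum_valP k) iB h).
  by rewrite -(part_uniq pL BL (enum_valP k) jB h).
Qed.
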